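(* Let $\delta,\kappa,a,\alpha>0$ and $\varphi\in(-\pi/2,\pi/2)$; put $d=2\pi\delta$, $\gamma=[-d,d]$, $\Gamma=\kappa\cos\varphi$, $q_0=\dfrac{2\pi\delta\kappa}{\cos\varphi}$. Let $\varepsilon^{(L)}:\gamma\to\mathbb{C}$ be continuous and write $\varepsilon^{(L)}(z)-1=\varepsilon_1(z)\exp[i\varepsilon_2(z)]$ with $\varepsilon_1,\varepsilon_2$ continuous, $\varepsilon_1(z)\ge1$ and $0\le\varepsilon_2(z)<\pi/2$ on $\gamma$; let $E_1=\max_{z\in\gamma}\varepsilon_1(z)=\max_{z\in\gamma}|\varepsilon^{(L)}(z)-1|$. Assume $$0<E_1q_0<1,\qquad \alpha<\alpha_0^{(1)}:=\frac{4}{27}\,\frac{1}{a^2}\,\frac{(1-E_1q_0)^3}{q_0}.$$ Then $P_K^{(1)}(p)=\alpha q_0p^3-(1-E_1q_0)p+a$ has two positive zeros $p_1^{(1)}<p_2^{(1)}$. Let $p\in(p_1^{(1)},p_2^{(1)})$ satisfy $$t_1:=q_0\bigl(E_1+3\alpha p^2\bigr)<1,$$ and assume $0<\alpha<\min\{\alpha_0^{(1)},\alpha_1^{(1)}\}$ with $\alpha_1^{(1)}=\frac13\bigl[q_0(1-E_1q_0)\bigr]^{-1}$. Then the operator $T$ maps $\bar S_p=\{U\in C(\gamma):\|U\|\le p\}$ into itself and $\|T(U)-T(V)\|\le t_1\|U-V\|$ for all $U,V\in\bar S_p$.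
   Context: $C(\gamma)$ is the Banach space of continuous complex-valued functions on $\gamma$ with norm $\|U\|=\max_{z\in\gamma}|U(z)|$. The operator $T:C(\gamma)\to C(\gamma)$ is $$T(U)(z)=a\,e^{-i\Gamma(z-d)}-\frac{i\kappa^2}{2\Gamma}\int_{-d}^{d}e^{i\Gamma|z-z_0|}\Bigl[1-\varepsilon^{(L)}(z_0)-\alpha|U(z_0)|^2\Bigr]U(z_0)\,dz_0,$$ whose fixed points are the solutions of the integral equation $(\ast)$: $U(z)+\frac{i\kappa^2}{2\Gamma}\int_{-d}^{d}e^{i\Gamma|z-z_0|}[1-(\varepsilon^{(L)}(z_0)+\alpha|U(z_0)|^2)]U(z_0)dz_0=a e^{-i\Gamma(z-d)}$, $z\in\gamma$ (here with a complex-valued, i.e. lossy, permittivity $\varepsilon^{(L)}$). *)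

(* Defs.v *)
From Stdlib Require Import Reals Lra ClassicalEpsilon.
Open Scope R_scope.

Definition Cx : Type := (R * R)%type.
Definition Cre (u : Cx) : R := fst u.
Definition Cim (u : Cx) : R := snd u.
Definition Cof (x : R) : Cx := (x, 0).
Definition Ci : Cx := (0, 1).
Definition Cadd (u v : Cx) : Cx := (fst u + fst v, snd u + snd v).
Definition Copp (u : Cx) : Cx := (- fst u, - snd u).
Definition Csub (u v : Cx) : Cx := Cadd u (Copp v).
Definition Cmul (u v : Cx) : Cx :=
  (fst u * fst v - snd u * snd v, fst u * snd v + snd u * fst v).
Definition Cmod (u : Cx) : R := sqrt (fst u ^ 2 + snd u ^ 2).
Definition Cexpi (t : R) : Cx := (cos t, sin t).

Definition in_seg (d z : R) : Prop := - d <= z <= d.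

Definition Ccont_on (d : R) (f : R -> Cx) : Prop :=
  forall z, in_seg d z -> forall eps, 0 < eps ->
    exists del, 0 < del /\
      forall y, in_seg d y -> Rabs (y - z) < del -> Cmod (Csub (f y) (f z)) < eps.

Definition Rcont_on (d : R) (f : R -> R) : Prop :=
  forall z, in_seg d z -> forall eps, 0 < eps ->
    exists del, 0 < del /\
      forall y, in_seg d y -> Rabs (y - z) < del -> Rabs (f y - f z) < eps.

(* the norm of C(gamma): max_{z in gamma} |U z|, realised as the least upper
   bound of {|U z| : z in gamma} (equal to the max for continuous U) *)
Definition sup_norm (d : R) (U : R -> Cx) : R :=
  epsilon (inhabits 0)
    (fun m => is_lub (fun y => exists z, in_seg d z /\ y = Cmod (U z)) m).

(* Riemann integral of a real function on [a,b] (value of RiemannInt; the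
   integrands used below are continuous, hence Riemann integrable) *)
Definition Rint (f : R -> R) (a b : R) : R :=
  epsilon (inhabits 0)
    (fun I => exists pr : Riemann_integrable f a b, RiemannInt pr = I).

Definition Cint (f : R -> Cx) (a b : R) : Cx :=
  (Rint (fun x => fst (f x)) a b, Rint (fun x => snd (f x)) a b).

Definition T_op (a kappa Gam d alpha : R) (epsL : R -> Cx) (U : R -> Cx)
    : R -> Cx :=
  fun z =>
    Csub (Cmul (Cof a) (Cexpi (- (Gam * (z - d)))))
      (Cmul (Cmul Ci (Cof (kappa ^ 2 / (2 * Gam))))
        (Cint (fun z0 =>
           Cmul (Cexpi (Gam * Rabs (z - z0)))
             (Cmul (Csub (Csub (Cof 1) (epsL z0)) (Cof (alpha * Cmod (U z0) ^ 2)))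
                   (U z0)))
          (- d) d)).

Definition PK1 (alpha q0 E1 a p : R) : R :=
  alpha * q0 * p ^ 3 - (1 - E1 * q0) * p + a.

(* Main.v *)
Require Import Defs.
From Stdlib Require Import Reals Lra Psatz ClassicalEpsilon.
Open Scope R_scope.

Lemma Cmod_pos u : 0 <= Cmod u.
Proof. unfold Cmod; apply sqrt_pos. Qed.

Lemma Cmod_sq u : Cmod u ^ 2 = fst u ^ 2 + snd u ^ 2.
Proof. unfold Cmod; rewrite pow2_sqrt; nra. Qed.

Lemma Cmod_le u M : 0 <= M -> fst u ^ 2 + snd u ^ 2 <= M ^ 2 -> Cmod u <= M.
Proof.
  intros HM H; unfold Cmod. rewrite <- (sqrt_pow2 M HM).
  apply sqrt_le_1; nra.
Qed.

Lemma Cmod_fst u : Rabs (fst u) <= Cmod u.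
Proof.
  pose proof (Cmod_sq u); pose proof (Cmod_pos u).
  apply Rabs_le; split; nra.
Qed.

Lemma Cmod_snd u : Rabs (snd u) <= Cmod u.
Proof.
  pose proof (Cmod_sq u); pose proof (Cmod_pos u).
  apply Rabs_le; split; nra.
Qed.

Lemma Cmod_mul u v : Cmod (Cmul u v) = Cmod u * Cmod v.
Proof.
  unfold Cmod, Cmul; simpl. rewrite <- sqrt_mult by nra. f_equal; ring.
Qed.

Lemma Cmod_add u v : Cmod (Cadd u v) <= Cmod u + Cmod v.
Proof.
  pose proof (Cmod_pos u); pose proof (Cmod_pos v).
  apply Cmod_le; [lra|]. unfold Cadd; simpl.
  pose proof (Cmod_sq u); pose proof (Cmod_sq v).
  pose proof (sqrt_cauchy (fst u) (snd u) (fst v) (snd v)).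
  unfold Rsqr in H3. fold (fst u ^ 2) in H3.
  replace (sqrt (fst u * fst u + snd u * snd u)) with (Cmod u) in H3
    by (unfold Cmod; f_equal; ring).
  replace (sqrt (fst v * fst v + snd v * snd v)) with (Cmod v) in H3
    by (unfold Cmod; f_equal; ring).
  nra.
Qed.

Lemma Cmod_opp u : Cmod (Copp u) = Cmod u.
Proof. unfold Cmod, Copp; simpl; f_equal; ring. Qed.

Lemma Cmod_sub u v : Cmod (Csub u v) <= Cmod u + Cmod v.
Proof. unfold Csub. rewrite <- (Cmod_opp v). apply Cmod_add. Qed.

Lemma Cmod_Cof x : Cmod (Cof x) = Rabs x.
Proof. unfold Cmod, Cof; simpl. rewrite <- sqrt_Rsqr_abs. unfold Rsqr. f_equal. ring. Qed.

Lemma Cmod_expi t : Cmod (Cexpi t) = 1.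
Proof. unfold Cmod, Cexpi. unfold fst, snd.
  pose proof (sin2_cos2 t). unfold Rsqr in H.
  replace (cos t ^ 2 + sin t ^ 2) with 1 by nra. apply sqrt_1. Qed.

Lemma Cmod_rev u v : Rabs (Cmod u - Cmod v) <= Cmod (Csub u v).
Proof.
  assert (E1 : u = Cadd (Csub u v) v) by (destruct u, v; unfold Cadd, Csub, Copp; simpl; f_equal; ring).
  assert (E2 : v = Cadd (Copp (Csub u v)) u) by (destruct u, v; unfold Cadd, Csub, Copp; simpl; f_equal; ring).
  pose proof (Cmod_add (Csub u v) v). rewrite <- E1 in H.
  pose proof (Cmod_add (Copp (Csub u v)) u). rewrite <- E2, Cmod_opp in H0.
  apply Rabs_le; lra.
Qed.

Lemma Rabs_sin_le x : Rabs (sin x) <= Rabs x.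
Proof.
  assert (K : forall y, 0 < y -> - y <= sin y < y).
  { intros y Hy. split; [|apply sin_lt_x; auto].
    destruct (Rle_lt_dec 1 y).
    - pose proof (SIN_bound y); lra.
    - pose proof PI2_3_2. assert (0 <= sin y) by (apply sin_ge_0; lra). lra. }
  destruct (Rtotal_order x 0) as [H|[H|H]].
  - pose proof (K (-x) ltac:(lra)). rewrite sin_neg in H0.
    rewrite (Rabs_left x H). apply Rabs_le; lra.
  - subst; rewrite sin_0; lra.
  - pose proof (K x H). rewrite (Rabs_pos_eq x) by lra. apply Rabs_le; lra.
Qed.

Lemma Cexpi_lip s t : Cmod (Csub (Cexpi s) (Cexpi t)) <= Rabs (s - t).
Proof.
  apply Cmod_le; [apply Rabs_pos|]. unfold Csub, Cadd, Copp, Cexpi; simpl.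
  pose proof (cos_2a_sin ((s - t) / 2)).
  replace (2 * ((s - t) / 2)) with (s - t) in H by field.
  rewrite cos_minus in H.
  pose proof (sin2_cos2 s); pose proof (sin2_cos2 t). unfold Rsqr in *.
  pose proof (Rabs_sin_le ((s - t)/2)).
  assert (sin ((s-t)/2) ^ 2 <= ((s - t)/2)^2).
  { rewrite <- (pow2_abs (sin _)), <- (pow2_abs ((s-t)/2)).
    pose proof (Rabs_pos (sin ((s-t)/2))). nra. }
  assert (Rabs (s - t) * Rabs (s-t) = (s-t)*(s-t)) by (rewrite <- Rabs_mult; apply Rabs_pos_eq; nra).
  nra.
Qed.

Definition clamp (d x : R) : R := Rmax (- d) (Rmin d x).

Lemma clamp_in d x : 0 <= d -> in_seg d (clamp d x).
Proof. intros; unfold clamp, in_seg, Rmax, Rmin.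
  destruct (Rle_dec d x); destruct (Rle_dec (-d) _); lra. Qed.

Lemma clamp_id d x : in_seg d x -> clamp d x = x.
Proof. unfold clamp, in_seg, Rmax, Rmin; intros.
  destruct (Rle_dec d x); destruct (Rle_dec (-d) _); lra. Qed.

Lemma clamp_lip d x y : 0 <= d -> Rabs (clamp d x - clamp d y) <= Rabs (x - y).
Proof. intros; unfold clamp, Rmax, Rmin.
  destruct (Rle_dec d x); destruct (Rle_dec d y);
  repeat match goal with |- context [Rle_dec ?a ?b] => destruct (Rle_dec a b) end;
  unfold Rabs; repeat destruct Rcase_abs; lra. Qed.

Lemma Rcont_clamp d f c : 0 <= d -> Rcont_on d f -> continuity_pt (fun x => f (clamp d x)) c.
Proof.
  intros Hd Hf. unfold continuity_pt, continue_in, limit1_in, limit_in. simpl. unfold R_dist.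
  intros eps Heps.
  destruct (Hf (clamp d c) (clamp_in d c Hd) eps Heps) as [del [Hdel H]].
  exists del; split; auto. intros x [_ Hx].
  apply H. apply clamp_in; auto.
  eapply Rle_lt_trans; [apply clamp_lip; auto | auto].
Qed.

Lemma Rcont_fst d F : Ccont_on d F -> Rcont_on d (fun z => fst (F z)).
Proof. intros H z Hz eps He. destruct (H z Hz eps He) as [del [Hd K]].
  exists del; split; auto; intros y Hy Hyz.
  eapply Rle_lt_trans; [|apply (K y Hy Hyz)]. apply (Cmod_fst (Csub (F y) (F z))). Qed.

Lemma Rcont_snd d F : Ccont_on d F -> Rcont_on d (fun z => snd (F z)).
Proof. intros H z Hz eps He. destruct (H z Hz eps He) as [del [Hd K]].
  exists del; split; auto; intros y Hy Hyz.
  eapply Rle_lt_trans; [|apply (K y Hy Hyz)]. apply (Cmod_snd (Csub (F y) (F z))). Qed.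

Lemma Rcont_Cmod d F : Ccont_on d F -> Rcont_on d (fun z => Cmod (F z)).
Proof. intros H z Hz eps He. destruct (H z Hz eps He) as [del [Hd K]].
  exists del; split; auto; intros y Hy Hyz.
  eapply Rle_lt_trans; [|apply (K y Hy Hyz)]. apply Cmod_rev. Qed.

Lemma Rcont_bounded d f : 0 <= d -> Rcont_on d f ->
  exists M, forall z, in_seg d z -> f z <= M.
Proof.
  intros Hd Hf.
  destruct (continuity_ab_maj (fun x => f (clamp d x)) (-d) d ltac:(lra)
     (fun c _ => Rcont_clamp d f c Hd Hf)) as [Mx [HM _]].
  exists (f (clamp d Mx)). intros z Hz. rewrite <- (clamp_id d z Hz). apply (HM z Hz).
Qed.

Lemma Ccont_bounded d F : 0 <= d -> Ccont_on d F ->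
  exists M, 0 <= M /\ forall z, in_seg d z -> Cmod (F z) <= M.
Proof.
  intros Hd HF. destruct (Rcont_bounded d _ Hd (Rcont_Cmod d F HF)) as [M HM].
  exists M; split; auto. eapply Rle_trans; [apply Cmod_pos|]. apply (HM 0). red; lra.
Qed.

Lemma Rcont_integrable d f : 0 <= d -> Rcont_on d f -> Riemann_integrable f (-d) d.
Proof.
  intros Hd Hf. apply Riemann_integrable_ext with (f := fun x => f (clamp d x)).
  - intros x Hx. rewrite Rmin_left, Rmax_right in Hx by lra. rewrite clamp_id; auto.
  - apply continuity_implies_RiemannInt; [lra|]. intros; apply Rcont_clamp; auto.
Qed.

Lemma Rint_eq f a b (pr : Riemann_integrable f a b) : Rint f a b = RiemannInt pr.
Proof.
  unfold Rint.
  destruct (epsilon_spec (inhabits 0)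
     (fun I => exists pr : Riemann_integrable f a b, RiemannInt pr = I))
     as [pr' Hpr'].
  - exists (RiemannInt pr); exists pr; reflexivity.
  - rewrite <- Hpr'. apply RiemannInt_P5.
Qed.

Lemma Rint_le f g a b : a <= b -> Riemann_integrable f a b -> Riemann_integrable g a b ->
  (forall x, a < x < b -> f x <= g x) -> Rint f a b <= Rint g a b.
Proof. intros Hab pf pg H. rewrite (Rint_eq f a b pf), (Rint_eq g a b pg).
  apply RiemannInt_P19; auto. Qed.

Lemma Rint_ext f g a b : a <= b -> Riemann_integrable f a b ->
  (forall x, a <= x <= b -> f x = g x) -> Rint f a b = Rint g a b.
Proof.
  intros Hab pf H.
  assert (pg : Riemann_integrable g a b).
  { apply Riemann_integrable_ext with f; auto. intros. rewrite Rmin_left, Rmax_right in H0 by lra. auto. }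
  apply Rle_antisym; apply Rint_le; auto; intros x Hx; rewrite H; lra.
Qed.

Lemma Rint_lin f g a b l : a <= b -> Riemann_integrable f a b -> Riemann_integrable g a b ->
  Rint (fun x => f x + l * g x) a b = Rint f a b + l * Rint g a b.
Proof.
  intros Hab pf pg. rewrite (Rint_eq _ _ _ (RiemannInt_P10 l pf pg)), (Rint_eq _ _ _ pf), (Rint_eq _ _ _ pg).
  apply RiemannInt_P13.
Qed.

Lemma Rint_const c a b : Rint (fun _ => c) a b = c * (b - a).
Proof. pose proof (Rint_eq (fct_cte c) _ _ (RiemannInt_P14 a b c)) as H.
  unfold fct_cte in H at 1. rewrite H. apply RiemannInt_P15. Qed.

Lemma Cint_sub d F G : 0 <= d -> Ccont_on d F -> Ccont_on d G ->
  Csub (Cint F (-d) d) (Cint G (-d) d) = Cint (fun x => Csub (F x) (G x)) (-d) d.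
Proof.
  intros Hd HF HG.
  pose proof (Rcont_integrable d _ Hd (Rcont_fst d F HF)) as F1.
  pose proof (Rcont_integrable d _ Hd (Rcont_snd d F HF)) as F2.
  pose proof (Rcont_integrable d _ Hd (Rcont_fst d G HG)) as G1.
  pose proof (Rcont_integrable d _ Hd (Rcont_snd d G HG)) as G2.
  unfold Cint, Csub, Cadd, Copp; simpl. f_equal.
  - rewrite <- (Rint_ext (fun x => fst (F x) + -1 * fst (G x)) (fun x => fst (F x) + - fst (G x)));
      [|lra| apply RiemannInt_P10; auto |].
    + rewrite Rint_lin; auto; [ring|lra].
    + intros; ring.
  - rewrite <- (Rint_ext (fun x => snd (F x) + -1 * snd (G x)) (fun x => snd (F x) + - snd (G x)));
      [|lra| apply RiemannInt_P10; auto |].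
    + rewrite Rint_lin; auto; [ring|lra].
    + intros; ring.
Qed.

Lemma Cint_bound d F C : 0 <= d -> Ccont_on d F ->
  (forall z, in_seg d z -> Cmod (F z) <= C) -> Cmod (Cint F (-d) d) <= 2 * d * C.
Proof.
  intros Hd HF HC.
  pose proof (Rcont_integrable d _ Hd (Rcont_fst d F HF)) as F1.
  pose proof (Rcont_integrable d _ Hd (Rcont_snd d F HF)) as F2.
  assert (C0 : 0 <= C) by (eapply Rle_trans; [apply Cmod_pos|apply (HC 0)]; red; lra).
  set (c1 := Rint (fun x => fst (F x)) (-d) d).
  set (c2 := Rint (fun x => snd (F x)) (-d) d).
  set (M := Cmod (Cint F (-d) d)).
  assert (HM2 : M ^ 2 = c1 * c1 + c2 * c2) by (unfold M; rewrite Cmod_sq; unfold Cint; simpl; fold c1 c2; ring).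
  assert (I1 : Riemann_integrable (fun x => c1 * fst (F x)) (-d) d) by (apply Riemann_integrable_scal; auto).
  assert (E : Rint (fun x => c1 * fst (F x) + c2 * snd (F x)) (-d) d = M ^ 2).
  { rewrite Rint_lin by (auto; lra).
    rewrite <- (Rint_ext (fun x => 0 + c1 * fst (F x)) (fun x => c1 * fst (F x))); [|lra| apply RiemannInt_P10; auto; apply RiemannInt_P14 |].
    - rewrite Rint_lin by (auto; try lra; apply RiemannInt_P14). rewrite Rint_const. fold c1 c2. lra.
    - intros; ring. }
  assert (L : Rint (fun x => c1 * fst (F x) + c2 * snd (F x)) (-d) d <= Rint (fun _ => M * C) (-d) d).
  { apply Rint_le; [lra| apply RiemannInt_P10; auto | apply RiemannInt_P14 |].
    intros x Hx.
    pose proof (sqrt_cauchy c1 c2 (fst (F x)) (snd (F x))).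
    assert (sqrt (c1² + c2²) = M) by (unfold M, Cmod, Cint, Rsqr; simpl; fold c1 c2; f_equal; ring).
    assert (sqrt ((fst (F x))² + (snd (F x))²) = Cmod (F x)) by (unfold Cmod, Rsqr; f_equal; ring).
    rewrite H0, H1 in H.
    assert (Cmod (F x) <= C) by (apply HC; red; lra).
    assert (0 <= M) by apply Cmod_pos. nra. }
  rewrite E, Rint_const in L.
  assert (0 <= M) by apply Cmod_pos.  clearbody c1 c2 M.
  assert (M * M <= M * (2 * d * C)) by (replace (M * (2*d*C)) with (M*C*(d - - d)) by ring; replace (M*M) with (M^2) by ring; exact L).
  destruct (Rle_lt_dec M 0). { assert (0 <= 2*d*C) by (apply Rmult_le_pos; lra). lra. }
  apply Rmult_le_reg_l with M; lra.
Qed.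

Lemma sup_norm_spec d U M : 0 <= d -> (forall z, in_seg d z -> Cmod (U z) <= M) ->
  is_lub (fun y => exists z, in_seg d z /\ y = Cmod (U z)) (sup_norm d U).
Proof.
  intros Hd HM. unfold sup_norm. apply epsilon_spec.
  destruct (completeness (fun y => exists z, in_seg d z /\ y = Cmod (U z))) as [m Hm].
  - exists M. intros y [z [Hz ->]]. auto.
  - exists (Cmod (U 0)). exists 0. split; auto. red; lra.
  - exists m; auto.
Qed.

Lemma sup_norm_le d U M : 0 <= d -> (forall z, in_seg d z -> Cmod (U z) <= M) ->
  sup_norm d U <= M.
Proof.
  intros Hd HM. destruct (sup_norm_spec d U M Hd HM) as [_ H]. apply H.
  intros y [z [Hz ->]]. auto.
Qed.

Lemma sup_norm_ub d U M z : 0 <= d -> (forall z, in_seg d z -> Cmod (U z) <= M) ->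
  in_seg d z -> Cmod (U z) <= sup_norm d U.
Proof.
  intros Hd HM Hz. destruct (sup_norm_spec d U M Hd HM) as [H _]. apply H. exists z; auto.
Qed.

Lemma Ccont_lip d F L : 0 <= L ->
  (forall y z, in_seg d y -> in_seg d z -> Cmod (Csub (F y) (F z)) <= L * Rabs (y - z)) ->
  Ccont_on d F.
Proof.
  intros HL H z Hz eps He. exists (eps / (L + 1)). split.
  - apply Rdiv_lt_0_compat; lra.
  - intros y Hy Hyz. eapply Rle_lt_trans; [apply H; auto|].
    apply Rle_lt_trans with (L * (eps / (L + 1))).
    + apply Rmult_le_compat_l; lra.
    + apply Rlt_le_trans with ((L + 1) * (eps / (L + 1))); [|right; field; lra].
      apply Rmult_lt_compat_r; [apply Rdiv_lt_0_compat|]; lra.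
Qed.

Lemma Ccont_ext d F G : (forall z, in_seg d z -> F z = G z) -> Ccont_on d F -> Ccont_on d G.
Proof. intros E H z Hz eps He. destruct (H z Hz eps He) as [del [Hd K]].
  exists del; split; auto. intros y Hy Hyz. rewrite <- (E y Hy), <- (E z Hz). auto. Qed.

Lemma Ccont_const d c : Ccont_on d (fun _ => c).
Proof. apply Ccont_lip with 0; [lra|]. intros. 
  replace (Csub c c) with (Cof 0) by (destruct c; unfold Csub, Cadd, Copp, Cof; simpl; f_equal; ring).
  rewrite Cmod_Cof, Rabs_R0. lra. Qed.

Lemma Ccont_sub d F G : Ccont_on d F -> Ccont_on d G -> Ccont_on d (fun z => Csub (F z) (G z)).
Proof.
  intros HF HG z Hz eps He.
  destruct (HF z Hz (eps/2) ltac:(lra)) as [d1 [Hd1 K1]].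
  destruct (HG z Hz (eps/2) ltac:(lra)) as [d2 [Hd2 K2]].
  exists (Rmin d1 d2). split; [apply Rmin_pos; auto|]. intros y Hy Hyz.
  replace (Csub (Csub (F y) (G y)) (Csub (F z) (G z))) with
     (Csub (Csub (F y) (F z)) (Csub (G y) (G z)))
     by (unfold Csub, Cadd, Copp; f_equal; simpl; ring).
  eapply Rle_lt_trans; [apply Cmod_sub|].
  pose proof (Rmin_l d1 d2); pose proof (Rmin_r d1 d2).
  pose proof (K1 y Hy ltac:(lra)); pose proof (K2 y Hy ltac:(lra)). lra.
Qed.

Lemma Ccont_mul d F G : 0 <= d -> Ccont_on d F -> Ccont_on d G -> Ccont_on d (fun z => Cmul (F z) (G z)).
Proof.
  intros Hd HF HG.
  destruct (Ccont_bounded d F Hd HF) as [MF [HMF BF]].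
  destruct (Ccont_bounded d G Hd HG) as [MG [HMG BG]].
  intros z Hz eps He.
  set (e := eps / (MF + MG + 1)).
  assert (He' : 0 < e) by (apply Rdiv_lt_0_compat; lra).
  destruct (HF z Hz e He') as [d1 [Hd1 K1]].
  destruct (HG z Hz e He') as [d2 [Hd2 K2]].
  exists (Rmin d1 d2). split; [apply Rmin_pos; auto|]. intros y Hy Hyz.
  replace (Csub (Cmul (F y) (G y)) (Cmul (F z) (G z))) with
     (Cadd (Cmul (F y) (Csub (G y) (G z))) (Cmul (Csub (F y) (F z)) (G z)))
     by (unfold Csub, Cadd, Copp, Cmul; f_equal; simpl; ring).
  eapply Rle_lt_trans; [apply Cmod_add|]. rewrite !Cmod_mul.
  pose proof (Rmin_l d1 d2); pose proof (Rmin_r d1 d2).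
  pose proof (K1 y Hy ltac:(lra)); pose proof (K2 y Hy ltac:(lra)).
  pose proof (BF y Hy); pose proof (BG z Hz).
  pose proof (Cmod_pos (F y)); pose proof (Cmod_pos (G z)).
  pose proof (Cmod_pos (Csub (G y) (G z))); pose proof (Cmod_pos (Csub (F y) (F z))).
  assert (e * (MF + MG + 1) = eps) by (unfold e; field; lra).
  nra.
Qed.

Lemma Ccont_Cmod d U : Ccont_on d U -> Ccont_on d (fun z => Cof (Cmod (U z))).
Proof. intros H z Hz eps He. destruct (H z Hz eps He) as [del [Hd K]].
  exists del; split; auto; intros y Hy Hyz.
  replace (Csub (Cof (Cmod (U y))) (Cof (Cmod (U z)))) with (Cof (Cmod (U y) - Cmod (U z)))
    by (unfold Csub, Cadd, Copp, Cof; f_equal; simpl; ring).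
  rewrite Cmod_Cof. eapply Rle_lt_trans; [apply Cmod_rev|]. auto. Qed.

Lemma cubic_factor A B a p1 p2 x :
  p1 <> p2 -> A * p1 ^ 3 - B * p1 + a = 0 -> A * p2 ^ 3 - B * p2 + a = 0 ->
  A * x ^ 3 - B * x + a = A * (x - p1) * (x - p2) * (x + p1 + p2).
Proof.
  intros Hne H1 H2.
  assert (HB : B = A * (p1^2 + p1*p2 + p2^2)).
  { apply Rmult_eq_reg_l with (p1 - p2); [|lra].
    replace ((p1 - p2) * B) with (A * p1^3 - A * p2^3) by lra. ring. }
  subst B. assert (a = A * p1 * p2 * (p1 + p2)) by lra. subst a. ring.
Qed.

Lemma cubic_roots A B a : 0 < A -> 0 < B -> 0 < a -> a * a * A < 4 * B^3 / 27 ->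
  exists p1 p2, 0 < p1 < p2 /\ A * p1 ^ 3 - B * p1 + a = 0 /\ A * p2 ^ 3 - B * p2 + a = 0.
Proof.
  intros HA HB Ha H.
  set (ps := sqrt (B / (3 * A))). set (L := sqrt (B / A)).
  assert (Hps2 : ps * ps = B / (3*A)) by (apply sqrt_sqrt; apply Rlt_le, Rdiv_lt_0_compat; lra).
  assert (HL2 : L * L = B / A) by (apply sqrt_sqrt; apply Rlt_le, Rdiv_lt_0_compat; lra).
  assert (Hps0 : 0 < ps) by (apply sqrt_lt_R0, Rdiv_lt_0_compat; lra).
  assert (HpsL : ps < L) by (apply sqrt_lt_1; try (apply Rlt_le, Rdiv_lt_0_compat; lra);
     unfold Rdiv; apply Rmult_lt_compat_l; [lra|]; apply Rinv_lt_contravar; nra).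
  assert (E1 : 3 * A * (ps * ps) = B) by (rewrite Hps2; field; lra).
  assert (E2 : A * (L * L) = B) by (rewrite HL2; field; lra).
  clearbody ps L.
  assert (Fps : A * ps ^ 3 - B * ps + a < 0).
  { assert (a < 2 * B * ps / 3).
    { assert (a * a < (2 * B * ps / 3) * (2 * B * ps / 3)).
      { apply Rmult_lt_reg_l with A; [lra|].
        replace (A * (2 * B * ps / 3 * (2 * B * ps / 3))) with (4 * B^2 * (A * (ps*ps)) / 9) by field.
        replace (A * (ps * ps)) with (B / 3) by lra.
        replace (4 * B ^ 2 * (B / 3) / 9) with (4 * B^3/27) by field.
        replace (A * (a*a)) with (a*a*A) by ring. lra. }
      assert (0 < 2 * B * ps / 3) by (apply Rdiv_lt_0_compat; nra).
      set (X := 2 * B * ps / 3) in *. clearbody X. nra. }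
    replace (A * ps ^ 3 - B * ps + a) with (ps * (A * (ps*ps)) - B * ps + a) by ring.
    replace (A * (ps * ps)) with (B / 3) by lra. lra. }
  assert (FL : A * L ^ 3 - B * L + a = a) by (replace (A * L ^ 3) with (A * (L*L) * L) by ring; rewrite E2; ring).
  destruct (IVT (fun x => - (A * x^3 - B * x + a)) 0 ps ltac:(reg) Hps0) as [p1 [Hp1 Hf1]].
  { simpl; lra. } { lra. }
  destruct (IVT (fun x => A * x^3 - B * x + a) ps L ltac:(reg) HpsL) as [p2 [Hp2 Hf2]].
  { lra. } { lra. }
  exists p1, p2.
  assert (p1 <> 0) by (intro; subst; simpl in Hf1; lra).
  assert (p1 <> ps) by (intro; subst; lra).
  assert (p2 <> ps) by (intro; subst; lra).
  repeat split; lra.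
Qed.

Definition Hf (alpha : R) (epsL U : R -> Cx) z0 :=
  Cmul (Csub (Csub (Cof 1) (epsL z0)) (Cof (alpha * Cmod (U z0) ^ 2))) (U z0).
Definition Gk Gam alpha epsL U z z0 := Cmul (Cexpi (Gam * Rabs (z - z0))) (Hf alpha epsL U z0).

Lemma T_unfold a kappa Gam d alpha epsL U z :
  T_op a kappa Gam d alpha epsL U z =
  Csub (Cmul (Cof a) (Cexpi (- (Gam * (z - d)))))
       (Cmul (Cmul Ci (Cof (kappa ^ 2 / (2 * Gam)))) (Cint (Gk Gam alpha epsL U z) (-d) d)).
Proof. reflexivity. Qed.

Lemma eps_bound e e1 e2 A : Csub e (Cof 1) = Cmul (Cof e1) (Cexpi e2) -> 0 <= e1 -> 0 <= A ->
  Cmod (Csub (Csub (Cof 1) e) (Cof A)) <= e1 + A.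
Proof.
  intros H He1 HA. destruct e as [x y]. unfold Csub, Cadd, Copp, Cof, Cmul, Cexpi in *; simpl in *.
  injection H as H1 H2. apply Cmod_le; [lra|]. simpl.
  pose proof (sin2_cos2 e2). pose proof (COS_bound e2). unfold Rsqr in *.
  assert (x = 1 + e1 * cos e2) by lra. assert (y = e1 * sin e2) by lra. subst x y.
  assert (0 <= e1 * A * (1 - cos e2)) by (apply Rmult_le_pos; nra).
  nra.
Qed.

Lemma Hf_cont d alpha epsL U : 0 <= d -> Ccont_on d epsL -> Ccont_on d U -> Ccont_on d (Hf alpha epsL U).
Proof.
  intros Hd He HU. unfold Hf. apply Ccont_mul; auto.
  apply Ccont_sub; [apply Ccont_sub; auto; apply Ccont_const|].
  apply Ccont_ext with (fun z => Cmul (Cof alpha) (Cmul (Cof (Cmod (U z))) (Cof (Cmod (U z))))).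
  - intros z _. unfold Cmul, Cof; simpl. f_equal; ring.
  - apply Ccont_mul; auto; [apply Ccont_const|]. apply Ccont_mul; auto; apply Ccont_Cmod; auto.
Qed.

Lemma expi_abs_lip Gam z y t : 0 <= Gam ->
  Cmod (Csub (Cexpi (Gam * Rabs (z - y))) (Cexpi (Gam * Rabs (z - t)))) <= Gam * Rabs (y - t).
Proof.
  intros HG. eapply Rle_trans; [apply Cexpi_lip|].
  replace (Gam * Rabs (z - y) - Gam * Rabs (z - t)) with (Gam * (Rabs (z - y) - Rabs (z - t))) by ring.
  rewrite Rabs_mult, (Rabs_pos_eq Gam HG). apply Rmult_le_compat_l; auto.
  eapply Rle_trans; [apply Rabs_triang_inv2|]. right. replace (z - y - (z - t)) with (-(y-t)) by ring. apply Rabs_Ropp.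
Qed.

Lemma Gk_cont d Gam alpha epsL U z : 0 <= d -> 0 <= Gam -> Ccont_on d epsL -> Ccont_on d U ->
  Ccont_on d (Gk Gam alpha epsL U z).
Proof.
  intros Hd HG He HU. unfold Gk. apply Ccont_mul; auto; [|apply Hf_cont; auto].
  apply Ccont_lip with Gam; auto. intros. apply expi_abs_lip; auto.
Qed.

Lemma Cmod_Ci_r r : 0 <= r -> Cmod (Cmul Ci (Cof r)) = r.
Proof. intros. rewrite Cmod_mul, Cmod_Cof, Rabs_pos_eq by auto.
  replace (Cmod Ci) with 1; [ring|]. unfold Cmod, Ci; simpl.
  replace (0 * (0 * 1) + 1 * (1 * 1)) with 1 by ring. now rewrite sqrt_1. Qed.

Lemma Csub_mul_l k X Y : Csub (Cmul k X) (Cmul k Y) = Cmul k (Csub X Y).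
Proof. unfold Csub, Cadd, Copp, Cmul; simpl; f_equal; ring. Qed.
Lemma Csub_mul_r k X Y : Csub (Cmul X k) (Cmul Y k) = Cmul (Csub X Y) k.
Proof. unfold Csub, Cadd, Copp, Cmul; simpl; f_equal; ring. Qed.
Lemma Csub4 A1 B1 A2 B2 : Csub (Csub A1 B1) (Csub A2 B2) = Csub (Csub A1 A2) (Csub B1 B2).
Proof. unfold Csub, Cadd, Copp; simpl; f_equal; ring. Qed.
Lemma Csub_same A B1 B2 : Csub (Csub A B1) (Csub A B2) = Copp (Csub B1 B2).
Proof. unfold Csub, Cadd, Copp; simpl; f_equal; ring. Qed.

Lemma Hf_bound alpha e u e1 e2 E1 p :
  Csub e (Cof 1) = Cmul (Cof e1) (Cexpi e2) -> 0 <= e1 <= E1 -> 0 <= alpha ->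
  Cmod u <= p ->
  Cmod (Cmul (Csub (Csub (Cof 1) e) (Cof (alpha * Cmod u ^ 2))) u) <= (E1 + alpha * p ^ 2) * p.
Proof.
  intros H He Ha Hu. rewrite Cmod_mul. pose proof (Cmod_pos u).
  pose proof (eps_bound e e1 e2 (alpha * Cmod u ^ 2) H ltac:(lra) ltac:(nra)).
  pose proof (Cmod_pos (Csub (Csub (Cof 1) e) (Cof (alpha * Cmod u ^ 2)))).
  assert (alpha * Cmod u ^ 2 <= alpha * p ^ 2) by (apply Rmult_le_compat_l; auto; nra).
  apply Rmult_le_compat; auto. lra.
Qed.

Lemma Hf_diff alpha e u v e1 e2 E1 p :
  Csub e (Cof 1) = Cmul (Cof e1) (Cexpi e2) -> 0 <= e1 <= E1 -> 0 <= alpha ->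
  Cmod u <= p -> Cmod v <= p ->
  Cmod (Csub (Cmul (Csub (Csub (Cof 1) e) (Cof (alpha * Cmod u ^ 2))) u)
             (Cmul (Csub (Csub (Cof 1) e) (Cof (alpha * Cmod v ^ 2))) v))
    <= (E1 + 3 * alpha * p ^ 2) * Cmod (Csub u v).
Proof.
  intros H He Ha Hu Hv.
  set (mu := Cmod u) in *. set (mv := Cmod v) in *.
  assert (Hmu : 0 <= mu) by apply Cmod_pos. assert (Hmv : 0 <= mv) by apply Cmod_pos.
  assert (Hr : Rabs (mu - mv) <= Cmod (Csub u v)) by apply Cmod_rev.
  set (w := Csub u v) in *.
  assert (Hw : 0 <= Cmod w) by apply Cmod_pos.
  replace (Csub (Cmul (Csub (Csub (Cof 1) e) (Cof (alpha * mu ^ 2))) u)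
             (Cmul (Csub (Csub (Cof 1) e) (Cof (alpha * mv ^ 2))) v))
    with (Csub (Cmul (Csub (Csub (Cof 1) e) (Cof 0)) w)
               (Cmul (Cof alpha) (Cadd (Cmul (Cof (mu ^ 2)) w) (Cmul (Cof ((mu - mv) * (mu + mv))) v))))
    by (unfold w; destruct e, u, v; unfold Csub, Cadd, Copp, Cmul, Cof; simpl; f_equal; ring).
  eapply Rle_trans; [apply Cmod_sub|].
  rewrite !Cmod_mul.
  pose proof (eps_bound e e1 e2 0 H ltac:(lra) ltac:(lra)).
  pose proof (Cmod_pos (Csub (Csub (Cof 1) e) (Cof 0))).
  eapply Rle_trans; [apply Rplus_le_compat; [apply Rmult_le_compat_r; [auto|]; exact H0 | apply Rle_refl]|].
  rewrite Cmod_Cof, (Rabs_pos_eq alpha Ha).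
  eapply Rle_trans; [apply Rplus_le_compat_l; apply Rmult_le_compat_l; [auto|apply Cmod_add]|].
  rewrite !Cmod_mul, !Cmod_Cof, Rabs_mult. fold mv.
  rewrite (Rabs_pos_eq (mu ^ 2)) by nra. rewrite (Rabs_pos_eq (mu + mv)) by nra.
  assert (mu ^ 2 <= p ^ 2) by nra.
  assert (Rabs (mu - mv) * (mu + mv) * mv <= Cmod w * (2 * p) * p).
  { apply Rmult_le_compat; [apply Rmult_le_pos; [apply Rabs_pos|lra] | lra | apply Rmult_le_compat; [apply Rabs_pos|lra|lra|lra] | lra]. }
  assert (mu ^ 2 * Cmod w <= p^2 * Cmod w) by nra.
  nra.
Qed.

Lemma expi_abs_lip2 Gam y z t : 0 <= Gam ->
  Cmod (Csub (Cexpi (Gam * Rabs (y - t))) (Cexpi (Gam * Rabs (z - t)))) <= Gam * Rabs (y - z).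
Proof.
  intros HG. eapply Rle_trans; [apply Cexpi_lip|].
  replace (Gam * Rabs (y - t) - Gam * Rabs (z - t)) with (Gam * (Rabs (y - t) - Rabs (z - t))) by ring.
  rewrite Rabs_mult, (Rabs_pos_eq Gam HG). apply Rmult_le_compat_l; auto.
  eapply Rle_trans; [apply Rabs_triang_inv2|]. right. f_equal; ring.
Qed.

Lemma Cmod_Ci_mul r X : 0 <= r -> Cmod (Cmul (Cmul Ci (Cof r)) X) = r * Cmod X.
Proof. intros. rewrite Cmod_mul, Cmod_Ci_r; auto. Qed.

Theorem theorem3
  (delta kappa a alpha phi : R)
  (epsL : R -> Cx) (eps1 eps2 : R -> R) (E1 : R)
  (Hdelta : 0 < delta) (Hkappa : 0 < kappa) (Ha : 0 < a) (Halpha : 0 < alpha)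
  (Hphi : - (PI / 2) < phi < PI / 2)
  (HepsL : Ccont_on (2 * PI * delta) epsL)
  (Heps1c : Rcont_on (2 * PI * delta) eps1)
  (Heps2c : Rcont_on (2 * PI * delta) eps2)
  (Hdecomp : forall z, in_seg (2 * PI * delta) z ->
       Csub (epsL z) (Cof 1) = Cmul (Cof (eps1 z)) (Cexpi (eps2 z)))
  (Heps1 : forall z, in_seg (2 * PI * delta) z -> 1 <= eps1 z)
  (Heps2 : forall z, in_seg (2 * PI * delta) z -> 0 <= eps2 z < PI / 2)
  (HE1max : (forall z, in_seg (2 * PI * delta) z -> eps1 z <= E1) /\
            (exists z, in_seg (2 * PI * delta) z /\ eps1 z = E1))
  (HE1q0 : 0 < E1 * (2 * PI * delta * kappa / cos phi) < 1)
  (Halpha0 : alpha < 4 / 27 * (1 / a ^ 2) *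
       ((1 - E1 * (2 * PI * delta * kappa / cos phi)) ^ 3
         / (2 * PI * delta * kappa / cos phi))) :
  let d := 2 * PI * delta in
  let Gam := kappa * cos phi in
  let q0 := 2 * PI * delta * kappa / cos phi in
  (exists p1 p2, 0 < p1 < p2 /\ PK1 alpha q0 E1 a p1 = 0 /\ PK1 alpha q0 E1 a p2 = 0 /\
     (forall x, 0 < x -> PK1 alpha q0 E1 a x = 0 -> x = p1 \/ x = p2)) /\
  (forall p1 p2 p,
     0 < p1 < p2 -> PK1 alpha q0 E1 a p1 = 0 -> PK1 alpha q0 E1 a p2 = 0 ->
     p1 < p < p2 ->
     q0 * (E1 + 3 * alpha * p ^ 2) < 1 ->
     alpha < / 3 * / (q0 * (1 - E1 * q0)) ->
     (forall U, Ccont_on d U -> sup_norm d U <= p ->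
        Ccont_on d (T_op a kappa Gam d alpha epsL U) /\
        sup_norm d (T_op a kappa Gam d alpha epsL U) <= p) /\
     (forall U V, Ccont_on d U -> sup_norm d U <= p ->
        Ccont_on d V -> sup_norm d V <= p ->
        sup_norm d (fun z => Csub (T_op a kappa Gam d alpha epsL U z)
                                  (T_op a kappa Gam d alpha epsL V z))
          <= q0 * (E1 + 3 * alpha * p ^ 2) * sup_norm d (fun z => Csub (U z) (V z)))).
Proof.
  intros d Gam q0.
  assert (Hdv : d = 2 * PI * delta) by reflexivity.
  assert (HGv : Gam = kappa * cos phi) by reflexivity.
  assert (Hqv : q0 = 2 * PI * delta * kappa / cos phi) by reflexivity.
  clearbody d Gam q0.
  rewrite <- Hqv in HE1q0, Halpha0.
  rewrite <- Hdv in HepsL, Heps1c, Heps2c, Hdecomp, Heps1, Heps2, HE1max, Hqv.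
  pose proof PI_RGT_0 as HPI.
  assert (Hcos : 0 < cos phi) by (apply cos_gt_0; lra).
  assert (Hd : 0 < d) by (subst; nra).
  assert (HG : 0 < Gam) by (subst; nra).
  assert (Hq : 0 < q0) by (subst; apply Rdiv_lt_0_compat; nra).
  set (A := alpha * q0). set (B := 1 - E1 * q0).
  assert (HAv : A = alpha * q0) by reflexivity. assert (HBv : B = 1 - E1 * q0) by reflexivity.
  assert (HA : 0 < A) by (unfold A; nra).
  assert (HB : 0 < B) by (unfold B; lra).
  assert (HPK : forall x, PK1 alpha q0 E1 a x = A * x ^ 3 - B * x + a) by (intros; unfold PK1, A, B; ring).
  clearbody A B.
  split.
  - assert (Hcond : a * a * A < 4 * B ^ 3 / 27).
    { rewrite HAv, HBv in *.
      assert (0 < a ^ 2 * q0) by (apply Rmult_lt_0_compat; nra).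
      pose proof (Rmult_lt_compat_r _ _ _ H Halpha0).
      replace (4 / 27 * (1 / a ^ 2) * ((1 - E1 * q0) ^ 3 / q0) * (a ^ 2 * q0)) with
        (4 * (1 - E1 * q0) ^ 3 / 27) in H0 by (field; split; nra).
      replace (a * a * (alpha * q0)) with (alpha * (a ^ 2 * q0)) by ring. lra. }
    destruct (cubic_roots A B a HA HB Ha Hcond) as [p1 [p2 [Hp [H1 H2]]]].
    exists p1, p2. rewrite !HPK. repeat split; try lra.
    intros x Hx Hfx. rewrite HPK in Hfx.
    rewrite (cubic_factor A B a p1 p2 x ltac:(lra) H1 H2) in Hfx.
    destruct (Rmult_integral _ _ Hfx) as [Hf|Hf]; [|lra].
    destruct (Rmult_integral _ _ Hf) as [Hf'|Hf']; [|right; lra].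
    destruct (Rmult_integral _ _ Hf') as [Hf''|Hf'']; [lra|left; lra].
  - intros p1 p2 p Hp12 Hf1 Hf2 Hp Ht1 Halpha1.
    rewrite HPK in Hf1, Hf2.
    assert (Hneg : A * p ^ 3 - B * p + a < 0).
    { rewrite (cubic_factor A B a p1 p2 p ltac:(lra) Hf1 Hf2).
      assert (0 < A * (p - p1)) by (apply Rmult_lt_0_compat; lra).
      assert (A * (p - p1) * (p - p2) < 0) by nra. nra. }
    assert (Hp0 : 0 < p) by lra.
    set (K := (E1 + alpha * p ^ 2) * p).
    assert (HK : a + q0 * K <= p) by (unfold K; rewrite HAv, HBv in *; nra).
    set (r := kappa ^ 2 / (2 * Gam)).
    assert (Hr0 : 0 <= r) by (unfold r; apply Rlt_le, Rdiv_lt_0_compat; nra).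
    assert (Hr : r * (2 * d) = q0) by (unfold r; subst; field; lra).
    assert (Hd0 : 0 <= d) by lra.
    assert (He1 : forall z, in_seg d z -> 0 <= eps1 z <= E1).
    { intros z Hz. pose proof (Heps1 z Hz). pose proof (proj1 HE1max z Hz). lra. }
    assert (HUp : forall U, Ccont_on d U -> sup_norm d U <= p -> forall z, in_seg d z -> Cmod (U z) <= p).
    { intros U HU HUs z Hz. destruct (Ccont_bounded d U Hd0 HU) as [M [_ HM]].
      eapply Rle_trans; [apply (sup_norm_ub d U M z Hd0 HM Hz)|auto]. }
    assert (HfB : forall U, (forall z, in_seg d z -> Cmod (U z) <= p) ->
        forall z0, in_seg d z0 -> Cmod (Hf alpha epsL U z0) <= K).
    { intros U HU z0 Hz0. unfold Hf, K.
      apply (Hf_bound alpha (epsL z0) (U z0) (eps1 z0) (eps2 z0) E1 p); auto; lra. }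
    split.
    + intros U HU HUs. pose proof (HUp U HU HUs) as HUb.
      split.
      * apply Ccont_lip with (a * Gam + r * (2 * d) * (Gam * K)).
        { assert (0 < E1) by (destruct (Rle_lt_dec E1 0); [nra|auto]).
          assert (0 <= K) by (unfold K; apply Rmult_le_pos; [|lra]; pose proof (pow2_ge_0 p); nra).
          apply Rplus_le_le_0_compat; apply Rmult_le_pos; try apply Rmult_le_pos; lra. }
        intros y z Hy Hz. rewrite !T_unfold, Csub4.
        eapply Rle_trans; [apply Cmod_sub|].
        rewrite !Csub_mul_l, Cmod_Ci_mul, Cmod_mul, Cmod_Cof by auto.
        rewrite Cint_sub by (auto; apply Gk_cont; auto; lra).
        rewrite Rmult_plus_distr_r. apply Rplus_le_compat.
        -- rewrite (Rabs_pos_eq a) by lra. rewrite Rmult_assoc. apply Rmult_le_compat_l; [lra|].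
           eapply Rle_trans; [apply Cexpi_lip|]. right.
           replace (- (Gam * (y - d)) - - (Gam * (z - d))) with (Gam * (z - y)) by ring.
           rewrite Rabs_mult, Rabs_pos_eq by lra. rewrite Rabs_minus_sym. reflexivity.
        -- replace (r * (2 * d) * (Gam * K) * Rabs (y - z)) with (r * (2 * d * (Gam * Rabs (y - z) * K))) by ring.
           apply Rmult_le_compat_l; auto. apply Cint_bound; auto.
           { apply Ccont_sub; apply Gk_cont; auto; lra. }
           intros z0 Hz0. unfold Gk. rewrite Csub_mul_r, Cmod_mul.
           apply Rmult_le_compat; try apply Cmod_pos.
           ++ apply expi_abs_lip2; lra.
           ++ apply HfB; auto.
      * apply sup_norm_le; auto. intros z Hz. rewrite T_unfold.
        eapply Rle_trans; [apply Cmod_sub|].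
        rewrite Cmod_Ci_mul, Cmod_mul, Cmod_Cof, Cmod_expi by auto.
        assert (Cmod (Cint (Gk Gam alpha epsL U z) (- d) d) <= 2 * d * K).
        { apply Cint_bound; auto. { apply Gk_cont; auto; lra. }
          intros z0 Hz0. unfold Gk. rewrite Cmod_mul, Cmod_expi, Rmult_1_l. apply HfB; auto. }
        rewrite Rabs_pos_eq by lra.
        assert (r * Cmod (Cint (Gk Gam alpha epsL U z) (- d) d) <= r * (2 * d * K))
          by (apply Rmult_le_compat_l; auto).
        replace (r * (2 * d * K)) with (q0 * K) in H0 by (rewrite <- Hr; ring). fold r. lra.
    + intros U V HU HUs HV HVs.
      pose proof (HUp U HU HUs) as HUb. pose proof (HUp V HV HVs) as HVb.
      destruct (Ccont_bounded d _ Hd0 (Ccont_sub d U V HU HV)) as [M [_ HM]].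
      apply sup_norm_le; auto. intros z Hz. cbv beta.
      rewrite !T_unfold, Csub_same, Cmod_opp, Csub_mul_l, Cmod_Ci_mul by auto.
      rewrite Cint_sub by (auto; apply Gk_cont; auto; lra).
      rewrite <- Hr.
      replace (r * (2 * d) * (E1 + 3 * alpha * p ^ 2) * sup_norm d (fun z0 => Csub (U z0) (V z0)))
        with (r * (2 * d * ((E1 + 3 * alpha * p ^ 2) * sup_norm d (fun z0 => Csub (U z0) (V z0))))) by ring.
      apply Rmult_le_compat_l; auto. apply Cint_bound; auto.
      { apply Ccont_sub; apply Gk_cont; auto; lra. }
      intros z0 Hz0. unfold Gk. rewrite Csub_mul_l, Cmod_mul, Cmod_expi, Rmult_1_l.
      eapply Rle_trans.
      { unfold Hf. apply (Hf_diff alpha (epsL z0) (U z0) (V z0) (eps1 z0) (eps2 z0) E1 p); auto; lra. }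
      apply Rmult_le_compat_l; [nra|].
      apply (sup_norm_ub d (fun z0 => Csub (U z0) (V z0)) M z0 Hd0 HM Hz0).
Qed.
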